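(* Let $(X,T)$ be a minimal topological dynamical system with $X$ compact metrisable and $T$ abelian, with maximal equicontinuous factor map $\pi:X\to X_{max}$, and let $e$ be a minimal idempotent of its Ellis semigroup. Let $f\in\Gamma_e$ with $f\neq e$. Then $\emptyset\neq\mathrm{supp}(f)\subseteq X_{max}^{sing}$.
   Context: The Ellis semigroup $E$ is the closure of the set of homeomorphisms $\{\alpha^t:t\in T\}$ in $X^X$ (pointwise convergence, composition as product); $\ker E$ is its smallest two-sided ideal, minimal idempotents are idempotents of $\ker E$, $J_{min}$ is the set of them. ${\mathcal H}_e=eEe$ is the structure group and $\Gamma_e$ is the subgroup of ${\mathcal H}_e$ generated by $eJ_{min}e$. For $f\in{\mathcal H}_e$ and $\xi\in X_{max}$, $f$ acts trivially at $\xi$ if every point of $e(\pi^{-1}(\xi))$ is fixed by $f$; $\mathrm{supp}(f)$ is the set of $\xi\in X_{max}$ at which $f$ does not act trivially. Two points are proximal if $\inf_t d(\alpha^t x,\alpha^t y)=0$. A point $\xi\in X_{max}$ is regular if all points of $\pi^{-1}(\xi)$ are distal (proximal to no other point), and $X_{max}^{sing}$ is the set of non-regular (singular) points. *)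

(* Defs.v *)
From HB Require Import structures.
From mathcomp Require Import all_boot all_order all_algebra.
From mathcomp Require Import all_classical all_reals all_analysis.
Set Implicit Arguments. Unset Strict Implicit. Unset Printing Implicit Defensive.
Import Order.TTheory GRing.Theory Num.Theory.
Local Open Scope classical_set_scope.
Local Open Scope ring_scope.

Section Dyn.
Context {R : realType}.

(* An action of the abelian group T (written additively) on X by
   homeomorphisms t |-> alpha t (continuity of each alpha t, and the
   group laws, make each alpha t a homeomorphism with inverse alpha (-t)). *)
Definition is_action (T : zmodType) (X : topologicalType) (alpha : T -> X -> X) :=
  [/\ forall x, alpha 0 x = x,
      forall s t x, alpha (s + t) x = alpha s (alpha t x)
    & forall t, continuous (alpha t)].

Definition minimal_action (T : zmodType) (X : topologicalType) (alpha : T -> X -> X) :=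
  forall x : X, closure (range (fun t => alpha t x)) = [set: X].

Definition equicontinuous_action (T : zmodType) (Y : pseudoMetricType R)
    (gamma : T -> Y -> Y) :=
  forall eps : R, 0 < eps -> exists2 delta : R, 0 < delta &
    forall y z : Y, ball y delta z -> forall t, ball (gamma t y) eps (gamma t z).

Definition factor_map (T : zmodType) (X Y : topologicalType)
    (alpha : T -> X -> X) (gamma : T -> Y -> Y) (rho : X -> Y) :=
  [/\ continuous rho, (forall y, exists x, rho x = y)
    & forall t x, rho (alpha t x) = gamma t (rho x)].

Definition max_equicontinuous_factor (T : zmodType) (X : topologicalType)
    (alpha : T -> X -> X) (Xmax : pseudoMetricType R) (beta : T -> Xmax -> Xmax)
    (pi : X -> Xmax) :=
  [/\ hausdorff_space Xmax, compact [set: Xmax], is_action beta,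
      equicontinuous_action beta & factor_map alpha beta pi] /\
      forall (Y : pseudoMetricType R) (gamma : T -> Y -> Y) (rho : X -> Y),
        hausdorff_space Y -> compact [set: Y] -> is_action gamma ->
        equicontinuous_action gamma -> factor_map alpha gamma rho ->
        exists psi : Xmax -> Y, factor_map beta gamma psi /\ rho = psi \o pi.

Definition ellis (T : zmodType) (X : topologicalType) (alpha : T -> X -> X)
  : set (X -> X) :=
  @closure {ptws X -> X} (range alpha).

Definition two_sided_ideal (X : Type) (E I : set (X -> X)) :=
  [/\ I !=set0, I `<=` E,
      (forall g h, E g -> I h -> I (g \o h)) &
      (forall g h, I g -> E h -> I (g \o h))].

Definition kerE (X : Type) (E : set (X -> X)) : set (X -> X) :=
  \bigcap_(I in two_sided_ideal E) I.

Definition minimal_idempotent (X : Type) (E : set (X -> X)) (e : X -> X) :=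
  kerE E e /\ e \o e = e.

Definition Jmin (X : Type) (E : set (X -> X)) := [set e | minimal_idempotent E e].

Definition Hgrp (X : Type) (E : set (X -> X)) (e : X -> X) : set (X -> X) :=
  [set e \o g \o e | g in E].

Definition subgroup_H (X : Type) (E : set (X -> X)) (e : X -> X)
    (S : set (X -> X)) :=
  [/\ S `<=` Hgrp E e, S e,
      (forall f g, S f -> S g -> S (f \o g)) &
      (forall f g, S f -> Hgrp E e g -> g \o f = e -> S g)].

Definition Gamma (X : Type) (E : set (X -> X)) (e : X -> X) : set (X -> X) :=
  \bigcap_(S in [set S | subgroup_H E e S /\
                  [set e \o u \o e | u in Jmin E] `<=` S]) S.

Definition acts_trivially_at (X Xmax : Type) (pi : X -> Xmax) (e f : X -> X)
    (xi : Xmax) :=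
  forall x, pi x = xi -> f (e x) = e x.

Definition supp (X Xmax : Type) (pi : X -> Xmax) (e f : X -> X) : set Xmax :=
  [set xi | ~ acts_trivially_at pi e f xi].

Definition proximal (T : zmodType) (X : pseudoMetricType R) (alpha : T -> X -> X)
    (x y : X) :=
  forall eps : R, 0 < eps -> exists t, ball (alpha t x) eps (alpha t y).

Definition distal_point (T : zmodType) (X : pseudoMetricType R)
    (alpha : T -> X -> X) (x : X) :=
  forall y, proximal alpha x y -> y = x.

Definition regular_point (T : zmodType) (X : pseudoMetricType R)
    (alpha : T -> X -> X) (Xmax : Type) (pi : X -> Xmax) (xi : Xmax) :=
  forall x, pi x = xi -> distal_point alpha x.

Definition Xsing (T : zmodType) (X : pseudoMetricType R)
    (alpha : T -> X -> X) (Xmax : Type) (pi : X -> Xmax) : set Xmax :=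
  [set xi | ~ regular_point alpha pi xi].

End Dyn.

(* Main.v *)
Require Import Defs.
From HB Require Import structures.
From mathcomp Require Import all_boot all_order all_algebra.
From mathcomp Require Import all_classical all_reals all_analysis.
From Stdlib Require Import Classical.
Import Order.TTheory GRing.Theory Num.Theory.
Local Open Scope classical_set_scope.
Local Open Scope ring_scope.

Section S.
Context (R : realType) (T : zmodType) (X : pseudoMetricType R) (alpha : T -> X -> X).
Hypothesis act : is_action alpha.

Lemma closure_filterP (A : set {ptws X -> X}) (p : {ptws X -> X}) :
  closure A p <-> exists2 G : set_system {ptws X -> X}, ProperFilter G &
     (forall x, (fun g : X -> X => g x) @ G --> p x) /\ G A.
Proof.
rewrite closureEcvg; split.
  move=> [G PG [Gp gA]]; exists G => //; split; last by apply: gA.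
  by apply/pointwise_cvgP.
move=> [G PG [Gp GA]]; exists G => //; split; first by apply/pointwise_cvgP.
by move=> B AB; apply: filterS GA.
Qed.

Let E := ellis alpha.

Lemma ellis_range t : E (alpha t).
Proof. by apply: subset_closure; exists t. Qed.

Lemma ellis_closed (g : X -> X) : @closure {ptws X -> X} E g -> E g.
Proof.
rewrite /E /ellis.
have C := (closure_id (@closure {ptws X -> X} (range alpha))).1 (@closed_closure {ptws X -> X} (range alpha)).
by rewrite -C.
Qed.

Lemma ellis_left s h : E h -> E (alpha s \o h).
Proof.
case: act => _ aD acont.
move=> /closure_filterP [G PG [Gh GA]]; apply/closure_filterP.
exists ((fun k : {ptws X -> X} => (alpha s \o k : {ptws X -> X})) @ G).
  exact: fmap_proper_filter.
split.
  move=> x /=. apply: (continuous_cvg _ (acont s (h x))).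
  exact: (Gh x).
suff : G [set k : X -> X | range alpha (alpha s \o k)] by [].
apply: filterS GA => k [t _ <-] /=; exists (s + t) => //.
by apply: funext => y; rewrite aD.

Qed.

Lemma ellis_comp g h : E g -> E h -> E (g \o h).
Proof.
move=> Eg Eh; apply: ellis_closed.
move: Eg => /closure_filterP [G PG [Gg GA]]; apply/closure_filterP.
exists ((fun k : {ptws X -> X} => (k \o h : {ptws X -> X})) @ G).
  exact: fmap_proper_filter.
split; first by move=> x; exact: (Gg (h x)).
suff : G [set k : X -> X | E (k \o h)] by [].
apply: filterS GA => k [t _ <-] /=; exact: ellis_left.
Qed.

Lemma ellis_prox u x : E u -> u \o u = u -> proximal alpha x (u x).
Proof.
move=> /closure_filterP [G PG [Gu GA]] uu eps eps0.
have e2 : 0 < eps / 2 by rewrite divr_gt0.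
have h1 : G [set g : X -> X | ball (u x) (eps/2) (g x)] := Gu x _ (nbhsx_ballx (u x) (eps/2) e2).
have h2 : G [set g : X -> X | ball (u (u x)) (eps/2) (g (u x))] := Gu (u x) _ (nbhsx_ballx (u (u x)) (eps/2) e2).
have [k [[t _ <-] [/= b1 b2]]] := filter_ex (filterI GA (filterI h1 h2)).
exists t.
have b2' : ball (u x) (eps / 2) (alpha t (u x)) by move: b2; rewrite -[u (u x)]/((u \o u) x) uu.
have := ball_triangle (ball_sym b1) b2'.
by rewrite -splitr.
Qed.

Lemma ellis_ideal : two_sided_ideal E E.
Proof.
split => //.
- by exists (alpha 0); exact: ellis_range.
- by move=> g h Eg Eh; exact: ellis_comp.
- by move=> g h Eg Eh; exact: ellis_comp.
Qed.

Lemma kerE_sub : kerE E `<=` E.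
Proof. by move=> u; apply; exact: ellis_ideal. Qed.

Lemma Hgrp_comp e f g : E e -> Hgrp E e f -> Hgrp E e g -> Hgrp E e (f \o g).
Proof.
move=> Ee [f' Ef <-] [g' Eg <-]; exists (f' \o e \o e \o g') => //.
by do 3 apply: ellis_comp => //.
Qed.

Lemma Hgrp_sub e : E e -> e \o e = e -> subgroup_H E e (Hgrp E e).
Proof.
move=> Ee ee; split => //.
- by exists e => //; rewrite ee ee.
- by move=> f g; exact: Hgrp_comp.
Qed.

Lemma Gamma_sub e : E e -> e \o e = e -> Gamma E e `<=` Hgrp E e.
Proof.
move=> Ee ee f; apply; split; first exact: Hgrp_sub.
move=> h [u [ku _] <-]; exists u => //; exact: kerE_sub.
Qed.

End S.


Theorem mainTheorem4 (R : realType) (T : zmodType) (X : pseudoMetricType R)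
    (alpha : T -> X -> X) (Xmax : pseudoMetricType R) (beta : T -> Xmax -> Xmax)
    (pi : X -> Xmax) (e f : X -> X) :
  hausdorff_space X -> compact [set: X] ->
  is_action alpha -> minimal_action alpha ->
  max_equicontinuous_factor alpha beta pi ->
  minimal_idempotent (ellis alpha) e ->
  Gamma (ellis alpha) e f -> f <> e ->
  supp pi e f !=set0 /\ supp pi e f `<=` Xsing alpha pi.
Proof.
move=> _ _ act _ _ [ke ee] Gf fne.
have Ee := @kerE_sub _ _ _ _ act e ke.
have [g Eg fdef] := @Gamma_sub _ _ _ _ act e Ee ee f Gf.
have eex x : e (e x) = e x by rewrite -[e (e x)]/((e \o e) x) ee.
split.
  apply: NNPP => Hn; apply: fne; apply: funext => x.
  have tr : acts_trivially_at pi e f (pi x).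
    by apply: NNPP => Hx; apply: Hn; exists (pi x).
  have := tr x erefl; rewrite -fdef /= eex => ->.
  by [].
move=> xi Hs reg; apply: Hs => x px.
have fixu u y : ellis alpha u -> u \o u = u -> pi y = xi -> u y = y.
  by move=> Eu uu py; apply: (reg y py); exact: ellis_prox.
pose S := [set h : X -> X | Hgrp (ellis alpha) e h /\ forall y, pi y = xi -> h y = y].
have : S f.
  apply: Gf; split.
    split.
    - by move=> h [].
    - split; first by exists e => //; rewrite ee ee.
      by move=> y py; exact: fixu.
    - move=> h1 h2 [H1 F1] [H2 F2]; split; first exact: (@Hgrp_comp _ _ _ _ act e _ _ Ee).
      by move=> y py /=; rewrite F2 // F1.
    - move=> h1 h2 [H1 F1] H2 h21; split => // y py.
      by rewrite -{1}(F1 y py) -[h2 (h1 y)]/((h2 \o h1) y) h21 fixu.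
  move=> h [u [ku uu] <-]; have Eu := @kerE_sub _ _ _ _ act u ku; split.
    by exists u.
  by move=> y py /=; rewrite (fixu e y) // (fixu u y) // (fixu e y).
by move=> [_ Ff]; rewrite (fixu e x) // Ff.
Qed.
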